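(* Let $d\ge2$ and let $Q$ be a qplex containing infinitely many points of the out-sphere $S_{\rm o}$. Then there is no polytope $P$ (convex hull of finitely many points) with $P\subseteq Q$ and $B_{\rm i}\subseteq P$; i.e., no polytope inscribed in $Q$ contains the in-sphere $S_{\rm i}$.
   Context: Fix an integer $d\ge 2$. $\langle\cdot,\cdot\rangle$ is the standard inner product on $\mathbb{R}^{d^2}$, $\|\cdot\|$ the Euclidean norm. $\Delta=\{p\in\mathbb{R}^{d^2}: p(i)\ge0,\ \sum_ip(i)=1\}$; $H=\{u\in\mathbb{R}^{d^2}:\sum_i u(i)=1\}$; $c=(1/d^2,\dots,1/d^2)$. For $A\subseteq H$ the polar is $A^*=\{u\in H:\langle u,v\rangle\ge\frac{1}{d(d+1)}\ \forall v\in A\}$. Out-ball $B_{\rm o}=\{u\in H:\|u-c\|\le r_{\rm o}\}$ with $r_{\rm o}^2=\frac{d-1}{d^2(d+1)}$, and out-sphere $S_{\rm o}=\{u\in H:\|u-c\|=r_{\rm o}\}$ (its points in a qplex are called pure points). In-ball $B_{\rm i}=\{u\in H:\|u-c\|\le r_{\rm i}\}$ with $r_{\rm i}^2=\frac{1}{d^2(d^2-1)}$ and in-sphere $S_{\rm i}$ its boundary in $H$. A qplex is a set $Q\subseteq\Delta\cap B_{\rm o}$ with $Q^*=Q$. *)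

(* Defs.v *)
(* classical reals. Vectors of R^{d^2} are functions nat -> R,
   only coordinates i < d*d are meaningful. *)
From Stdlib Require Export Reals List.
Open Scope R_scope.

Fixpoint sumN (n : nat) (f : nat -> R) : R :=
  match n with O => 0 | S k => sumN k f + f k end.

Definition dim (d : nat) : nat := (d * d)%nat.

Definition inner (d : nat) (u v : nat -> R) : R := sumN (dim d) (fun i => u i * v i).

Definition cvec (d : nat) : nat -> R := fun _ => 1 / (INR d * INR d).

Definition dist2c (d : nat) (u : nat -> R) : R :=
  sumN (dim d) (fun i => (u i - cvec d i) * (u i - cvec d i)).

Definition in_H (d : nat) (u : nat -> R) : Prop := sumN (dim d) u = 1.

Definition in_simplex (d : nat) (u : nat -> R) : Prop :=
  (forall i, (i < dim d)%nat -> 0 <= u i) /\ sumN (dim d) u = 1.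

Definition ro2 (d : nat) : R := (INR d - 1) / (INR d * INR d * (INR d + 1)).
Definition ri2 (d : nat) : R := 1 / (INR d * INR d * (INR d * INR d - 1)).

Definition in_out_ball (d : nat) (u : nat -> R) : Prop := in_H d u /\ dist2c d u <= ro2 d.
Definition in_out_sphere (d : nat) (u : nat -> R) : Prop := in_H d u /\ dist2c d u = ro2 d.
Definition in_in_ball (d : nat) (u : nat -> R) : Prop := in_H d u /\ dist2c d u <= ri2 d.

Definition polar (d : nat) (A : (nat -> R) -> Prop) (u : nat -> R) : Prop :=
  in_H d u /\ forall v, A v -> inner d u v >= 1 / (INR d * (INR d + 1)).

Definition qplex (d : nat) (Q : (nat -> R) -> Prop) : Prop :=
  (forall u, Q u -> in_simplex d u /\ in_out_ball d u) /\
  (forall u, Q u <-> polar d Q u).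

(* Q contains infinitely many pure points: no finite list covers them
   (as vectors, i.e. up to agreement on the coordinates i < d^2). *)
Definition infinitely_many_pure (d : nat) (Q : (nat -> R) -> Prop) : Prop :=
  ~ exists L : list (nat -> R),
      forall u, Q u -> in_out_sphere d u ->
        exists v, In v L /\ forall i, (i < dim d)%nat -> u i = v i.

Definition conv (d : nat) (m : nat) (pts : nat -> nat -> R) (x : nat -> R) : Prop :=
  exists lam : nat -> R,
    (forall j, (j < m)%nat -> 0 <= lam j) /\ sumN m lam = 1 /\
    forall i, (i < dim d)%nat -> x i = sumN m (fun j => lam j * pts j i).

(* Main.v *)
Require Import Defs.
From Stdlib Require Import Reals List Lra Lia ClassicalEpsilon.
Open Scope R_scope.

Lemma sumN_ext n f g : (forall i, (i<n)%nat -> f i = g i) -> sumN n f = sumN n g.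
Proof. induction n; intros H; cbn [sumN]; auto.
  rewrite IHn by (intros; apply H; lia). rewrite (H n) by lia. reflexivity. Qed.
Lemma sumN_plus n f g : sumN n (fun i => f i + g i) = sumN n f + sumN n g.
Proof. induction n; cbn [sumN]; [lra|rewrite IHn; ring]. Qed.
Lemma sumN_scal n a f : sumN n (fun i => a * f i) = a * sumN n f.
Proof. induction n; cbn [sumN]; [ring|rewrite IHn; ring]. Qed.
Lemma sumN_const n a : sumN n (fun _ => a) = INR n * a.
Proof. induction n; cbn [sumN]; [simpl; ring|rewrite IHn, S_INR; ring]. Qed.
Lemma sumN_swap n m F : sumN n (fun i => sumN m (fun j => F i j)) = sumN m (fun j => sumN n (fun i => F i j)).
Proof. induction n; cbn [sumN].
  - rewrite sumN_const; ring.
  - rewrite IHn, <- sumN_plus. reflexivity. Qed.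
Lemma sumN_nonneg n f : (forall i, (i<n)%nat -> 0 <= f i) -> 0 <= sumN n f.
Proof. induction n; intros H; cbn [sumN]; [lra|].
  assert (0 <= f n) by (apply H; lia). assert (0 <= sumN n f) by (apply IHn; intros; apply H; lia). lra. Qed.
Lemma sumN_zero_each n f : (forall i, (i<n)%nat -> 0 <= f i) -> sumN n f = 0 -> forall i, (i<n)%nat -> f i = 0.
Proof. induction n; intros H S i Hi; [lia|]. cbn [sumN] in S.
  assert (0 <= f n) by (apply H; lia). assert (0 <= sumN n f) by (apply sumN_nonneg; intros; apply H; lia).
  destruct (Nat.eq_dec i n) as [->|]; [lra|]. apply IHn; [intros; apply H; lia|lra|lia]. Qed.
Lemma sumN_delta m j f : sumN m (fun k => if Nat.eqb k j then f k else 0) = if Nat.ltb j m then f j else 0.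
Proof. induction m; cbn [sumN]; [reflexivity|]. rewrite IHm.
  destruct (Nat.eqb_spec m j), (Nat.ltb_spec j m), (Nat.ltb_spec j (S m)); subst; try lia; lra. Qed.

Definition KK d := 1 / (INR d * (INR d + 1)).
Definition v0 d (u : nat -> R) : nat -> R :=
  fun i => cvec d i - (1/(INR d - 1)) * (u i - cvec d i).

Lemma INR_dim d : INR (dim d) = INR d * INR d.
Proof. unfold dim. apply mult_INR. Qed.

Lemma D2 d : (2 <= d)%nat -> 2 <= INR d.
Proof. intros; change 2 with (INR 2); apply le_INR; lia. Qed.

Lemma inner_self d u : (2<=d)%nat -> in_out_sphere d u -> inner d u u = ro2 d + 1/(INR d * INR d).
Proof. intros Hd [HH E]. pose proof (D2 d Hd). unfold dist2c, in_H, inner, cvec in *.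
  set (c := 1/(INR d * INR d)) in *.
  rewrite (sumN_ext _ _ (fun i => (u i * u i + (-2*c) * u i) + c*c)) in E by (intros; ring).
  rewrite sumN_plus, sumN_plus, sumN_scal, sumN_const, INR_dim, HH in E.
  assert (INR d * INR d * (c*c) = c) by (unfold c; field; lra). lra. Qed.

Lemma inner_v0 d u w : (2<=d)%nat -> in_H d u -> in_H d w ->
  inner d u (v0 d w) = 1/(INR d * INR d) - (1/(INR d - 1)) * (inner d u w - 1/(INR d * INR d)).
Proof. intros Hd Hu Hw. unfold inner, v0, cvec, in_H in *.
  set (c := 1/(INR d * INR d)). set (t := 1/(INR d - 1)).
  rewrite (sumN_ext _ _ (fun i => (c * u i + (-t) * (u i * w i)) + (t*c) * u i)) by (intros; ring).
  rewrite sumN_plus, sumN_plus, !sumN_scal, Hu. ring. Qed.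

Lemma v0_ball d u : (2<=d)%nat -> in_out_sphere d u -> in_in_ball d (v0 d u).
Proof. intros Hd [HH E]. pose proof (D2 d Hd). unfold in_in_ball, in_H, dist2c, v0, cvec in *.
  set (c := 1/(INR d * INR d)) in *. set (t := 1/(INR d - 1)). split.
  - rewrite (sumN_ext _ _ (fun i => (c + t*c) + (-t) * u i)) by (intros; ring).
    rewrite sumN_plus, sumN_scal, sumN_const, INR_dim, HH. unfold c, t. field. lra.
  - rewrite (sumN_ext _ _ (fun i => (t*t) * ((u i - c) * (u i - c)))) by (intros; ring).
    rewrite sumN_scal, E. unfold t, ro2, ri2. right. field. repeat split; nra.
Qed.

Lemma KK_eq d : (2<=d)%nat -> KK d = 1/(INR d * INR d) - (1/(INR d - 1)) * ro2 d.
Proof. intros Hd. pose proof (D2 d Hd). unfold KK, ro2. field. lra. Qed.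

Lemma conv_inner d m pts lam w x :
  (forall i, (i < dim d)%nat -> x i = sumN m (fun j => lam j * pts j i)) ->
  inner d w x = sumN m (fun j => lam j * inner d w (pts j)).
Proof. intros H. unfold inner.
  rewrite (sumN_ext _ _ (fun i => sumN m (fun j => w i * (lam j * pts j i)))).
  2:{ intros i Hi. rewrite H by exact Hi. rewrite <- sumN_scal. reflexivity. }
  rewrite sumN_swap. apply sumN_ext. intros j _. rewrite <- sumN_scal. apply sumN_ext. intros; ring. Qed.

Lemma pts_in d m pts j : (j < m)%nat -> conv d m pts (pts j).
Proof. intros Hj. exists (fun k => if Nat.eqb k j then 1 else 0). split; [|split].
  - intros k _. destruct (Nat.eqb k j); lra.
  - pose proof (sumN_delta m j (fun _ => 1)) as E. cbv beta in E. rewrite E.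
    destruct (Nat.ltb_spec j m); [reflexivity|lia].
  - intros i _. rewrite (sumN_ext _ _ (fun k => if Nat.eqb k j then pts k i else 0)).
    + rewrite (sumN_delta m j (fun k => pts k i)). destruct (Nat.ltb_spec j m); [reflexivity|lia].
    + intros k _. destruct (Nat.eqb k j); ring. Qed.

Lemma key d Q m pts u u' :
 (2<=d)%nat -> qplex d Q -> (forall x, conv d m pts x -> Q x) ->
 (forall x, in_in_ball d x -> conv d m pts x) ->
 Q u -> in_out_sphere d u -> Q u' -> in_out_sphere d u' ->
 (forall j, (j<m)%nat -> (inner d u (pts j) = KK d <-> inner d u' (pts j) = KK d)) ->
 forall i, (i < dim d)%nat -> u i = u' i.
Proof.
  intros Hd [HQ1 HQ2] H1 H2 Qu Su Qu' Su' Hsig.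
  pose proof (D2 d Hd) as HD.
  assert (Hge : forall w j, Q w -> (j<m)%nat -> inner d w (pts j) >= KK d).
  { intros w j Qw Hj. apply HQ2 in Qw. destruct Qw as [_ Hp]. apply Hp. apply H1. apply pts_in. exact Hj. }
  destruct (H2 _ (v0_ball d u' Hd Su')) as [lam [Hl0 [Hl1 Hlx]]].
  assert (E' : inner d u' (v0 d u') = KK d).
  { rewrite inner_v0 by (try apply Su'; auto). rewrite inner_self by auto. rewrite KK_eq by auto. ring. }
  rewrite (conv_inner d m pts lam u' _ Hlx) in E'.
  assert (Z : forall j, (j<m)%nat -> lam j * (inner d u' (pts j) - KK d) = 0).
  { apply sumN_zero_each.
    - intros j Hj. apply Rmult_le_pos; [apply Hl0; auto|]. pose proof (Hge u' j Qu' Hj). lra.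
    - rewrite (sumN_ext _ _ (fun j => lam j * inner d u' (pts j) + (- KK d) * lam j)) by (intros; ring).
      rewrite sumN_plus, sumN_scal, E', Hl1. ring. }
  assert (E : inner d u (v0 d u') = KK d).
  { rewrite (conv_inner d m pts lam u _ Hlx).
    rewrite (sumN_ext _ _ (fun j => KK d * lam j)).
    - rewrite sumN_scal, Hl1. ring.
    - intros j Hj. specialize (Z j Hj). apply Rmult_integral in Z. destruct Z as [Z|Z].
      + rewrite Z; ring.
      + assert (inner d u (pts j) = KK d) by (apply Hsig; auto; lra). rewrite H; ring. }
  rewrite inner_v0 in E by (try apply Su; try apply Su'; auto).
  rewrite KK_eq in E by auto.
  assert (Huu' : inner d u u' = ro2 d + 1/(INR d * INR d)).
  { assert (1/(INR d - 1) <> 0) by (apply Rgt_not_eq; apply Rdiv_lt_0_compat; lra).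
    apply (Rmult_eq_reg_l (1/(INR d - 1))); [lra|auto]. }
  assert (Hsym : inner d u' u = inner d u u') by (unfold inner; apply sumN_ext; intros; ring).
  pose proof (inner_self d u Hd Su). pose proof (inner_self d u' Hd Su').
  assert (S0 : sumN (dim d) (fun i => (u i - u' i) * (u i - u' i)) = 0).
  { rewrite (sumN_ext _ _ (fun i => (u i * u i + (-2) * (u i * u' i)) + u' i * u' i)) by (intros; ring).
    rewrite sumN_plus, sumN_plus, sumN_scal. fold (inner d u u) (inner d u u') (inner d u' u'). lra. }
  intros i Hi. pose proof (sumN_zero_each _ _ (fun i _ => Rle_0_sqr (u i - u' i)) S0 i Hi) as Z0. cbv beta in Z0. apply Rmult_integral in Z0. lra.
Qed.

Fixpoint allb (k : nat) : list (list bool) :=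
  match k with O => nil :: nil
  | S k => flat_map (fun l => (true :: l) :: (false :: l) :: nil) (allb k) end.

Lemma allb_in l : In l (allb (length l)).
Proof. induction l; simpl; [auto|]. apply in_flat_map. exists l. split; auto. destruct a; simpl; auto. Qed.

Lemma map_eq_in {A B} (g g' : A -> B) l x : map g l = map g' l -> In x l -> g x = g' x.
Proof. induction l; simpl; [tauto|]. intros H [->|Hx]; inversion H; auto. Qed.

Theorem mainTheorem6 (d : nat) (Q : (nat -> R) -> Prop) :
  (2 <= d)%nat -> qplex d Q -> infinitely_many_pure d Q ->
  ~ exists (m : nat) (pts : nat -> nat -> R),
      (forall x, conv d m pts x -> Q x) /\
      (forall x, in_in_ball d x -> conv d m pts x).
Proof.
  intros Hd HQ Hinf [m [pts [H1 H2]]]. apply Hinf.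
  set (sg := fun u : nat -> R => map (fun j => if Req_EM_T (inner d u (pts j)) (KK d) then true else false) (seq 0 m)).
  set (f := fun b => epsilon (inhabits (fun _ : nat => 0)) (fun u => Q u /\ in_out_sphere d u /\ sg u = b)).
  exists (map f (allb m)). intros u Qu Su.
  assert (Hex : exists w, Q w /\ in_out_sphere d w /\ sg w = sg u) by (exists u; auto).
  pose proof (epsilon_spec (inhabits (fun _ : nat => 0)) _ Hex) as [Qw [Sw Ew]]. fold (f (sg u)) in Qw, Sw, Ew.
  exists (f (sg u)). split.
  - apply in_map. assert (Hl : length (sg u) = m) by (unfold sg; rewrite length_map, length_seq; reflexivity).
    pose proof (allb_in (sg u)) as Ha. rewrite Hl in Ha. exact Ha.
  - apply (key d Q m pts); auto. intros j Hj.
    assert (In j (seq 0 m)) by (apply in_seq; lia).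
    pose proof (map_eq_in _ _ _ _ Ew H) as G. cbv beta in G.
    destruct (Req_EM_T (inner d u (pts j)) (KK d)), (Req_EM_T (inner d (f (sg u)) (pts j)) (KK d));
      try discriminate; tauto.
Qed.
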